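(* Let $\Lambda$ be an ordered abelian group and $(X,d)$ a geodesic $\Lambda$-metric space such that $(x\cdot y)_z\in\Lambda$ for all $x,y,z\in X$. For $\delta\in\Lambda$, $\delta\geqslant 0$, consider the properties: (H1,$\delta$): $(X,d)$ is $\delta$-hyperbolic; (H2,$\delta$): every geodesic triangle in $X$ is $\delta$-thin; (H3,$\delta$): for every geodesic triangle with sides $[x,y],[y,z],[x,z]$ and every $u\in[x,y]$ there exists $w\in[x,z]\cup[y,z]$ with $d(u,w)\leqslant\delta$. Then (H1,$\delta$)$\Rightarrow$(H2,$4\delta$), (H2,$\delta$)$\Rightarrow$(H1,$2\delta$), (H2,$\delta$)$\Rightarrow$(H3,$\delta$), (H3,$\delta$)$\Rightarrow$(H2,$4\delta$), (H1,$\delta$)$\Rightarrow$(H3,$4\delta$), and (H3,$\delta$)$\Rightarrow$(H1,$8\delta$).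
   Context: An ordered abelian group is an abelian group with a total order compatible with addition; $\Lambda_{\mathbb{Q}}$ is its ordered divisible hull containing $\Lambda$. A $\Lambda$-metric space is a set $X$ with $d:X\times X\to\Lambda$ satisfying $d\geqslant0$, $d(x,y)=0\iff x=y$, symmetry and the triangle inequality. Gromov product: $(x\cdot y)_v=\tfrac12(d(x,v)+d(y,v)-d(x,y))\in\Lambda_{\mathbb{Q}}$. $X$ is $\delta$-hyperbolic if $(x\cdot y)_v\geqslant\min\{(x\cdot z)_v,(z\cdot y)_v\}-\delta$ for all $v,x,y,z\in X$. A segment $[p,q]$ is the image of an isometric map $\alpha:\{t\in\Lambda:a\leqslant t\leqslant b\}\to X$ (metric $|s-t|$) with $\alpha(a)=p,\alpha(b)=q$; $X$ is geodesic if any two points are endpoints of a segment. A geodesic triangle $\Delta(x,y,z)$ is a union of chosen segments $[x,y],[y,z],[x,z]$. It is $\delta$-thin if for each vertex, say $x$ (and likewise for $y$ and $z$), and all $u\in[x,y]$, $v\in[x,z]$ with $d(x,u)=d(x,v)\leqslant(y\cdot z)_x$, one has $d(u,v)\leqslant\delta$ (equivalently: points identified by the natural map of the triangle onto its comparison $\Lambda$-tripod are at distance $\leqslant\delta$). *)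

(* Defs.v *)
From HB Require Import structures.
From mathcomp Require Import all_boot all_order all_algebra.
Set Implicit Arguments. Unset Strict Implicit. Unset Printing Implicit Defensive.
Import GRing.Theory.
Local Open Scope ring_scope.

Section Defs.
Variable L : zmodType.
Variable le : rel L.

Definition ordered_abelian_group : Prop :=
  [/\ (forall a, le a a),
      (forall a b, le a b -> le b a -> a = b),
      (forall a b c, le a b -> le b c -> le a c),
      (forall a b, le a b || le b a)
    & (forall a b c, le a b -> le (a + c) (b + c))].

Definition minL (a b : L) : L := if le a b then a else b.
Definition absdiff (s t : L) : L := if le s t then t - s else s - t.

Variable X : Type.
Variable d : X -> X -> L.

Definition Lmetric : Prop :=
  [/\ (forall x y, le 0 (d x y)),
      (forall x y, d x y = 0 <-> x = y),
      (forall x y, d x y = d y x)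
    & (forall x y z, le (d x z) (d x y + d y z))].

Definition is_segment (S : X -> Prop) (p q : X) : Prop :=
  exists (a b : L) (alpha : L -> X),
    [/\ le a b,
        (forall s t, le a s -> le s b -> le a t -> le t b ->
             d (alpha s) (alpha t) = absdiff s t),
        alpha a = p, alpha b = q
      & (forall w, S w <-> exists t, [/\ le a t, le t b & alpha t = w])].

Definition geodesic : Prop := forall p q, exists S, is_segment S p q.

Definition geodesic_triangle (x y z : X) (Sxy Syz Sxz : X -> Prop) : Prop :=
  [/\ is_segment Sxy x y, is_segment Syz y z & is_segment Sxz x z].

(* gp x y v stands for the Gromov product (x . y)_v, assumed to lie in L *)
Variable gp : X -> X -> X -> L.

Definition hyperbolic (delta : L) : Prop :=
  forall v x y z, le (minL (gp x z v) (gp z y v) - delta) (gp x y v).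

Definition thin_at (x y z : X) (Sxy Sxz : X -> Prop) (delta : L) : Prop :=
  forall u v, Sxy u -> Sxz v -> d x u = d x v -> le (d x u) (gp y z x) ->
    le (d u v) delta.

Definition thin_triangle (x y z : X) (Sxy Syz Sxz : X -> Prop) (delta : L)
  : Prop :=
  [/\ thin_at x y z Sxy Sxz delta,
      thin_at y x z Sxy Syz delta
    & thin_at z x y Sxz Syz delta].

Definition H1 (delta : L) : Prop := hyperbolic delta.

Definition H2 (delta : L) : Prop :=
  forall x y z Sxy Syz Sxz, geodesic_triangle x y z Sxy Syz Sxz ->
    thin_triangle x y z Sxy Syz Sxz delta.

Definition H3 (delta : L) : Prop :=
  forall x y z Sxy Syz Sxz, geodesic_triangle x y z Sxy Syz Sxz ->
    forall u, Sxy u -> exists w, (Sxz w \/ Syz w) /\ le (d u w) delta.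

End Defs.

(* Main.v *)
Require Import Defs.
From HB Require Import structures.
From mathcomp Require Import all_boot all_order all_algebra.
Import GRing.Theory.
Local Open Scope ring_scope.

Module Aux.
Set Implicit Arguments. Unset Strict Implicit. Unset Printing Implicit Defensive.

Section OG.
Variables (L : zmodType) (le : rel L).
Hypothesis hL : ordered_abelian_group le.

Lemma o_refl a : le a a. Proof. by case: hL. Qed.
Lemma o_anti a b : le a b -> le b a -> a = b. Proof. by case: hL => _ h _ _ _; apply: h. Qed.
Lemma o_trans a b c : le a b -> le b c -> le a c. Proof. by case: hL => _ _ h _ _; apply: h. Qed.
Lemma o_tot a b : le a b || le b a. Proof. by case: hL. Qed.
Lemma o_addr a b c : le a b -> le (a + c) (b + c). Proof. by case: hL => _ _ _ _ h; apply: h. Qed.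

Lemma o_leD2r a b c : le (a + c) (b + c) = le a b.
Proof.
apply/idP/idP; last exact: o_addr.
by move=> /(@o_addr _ _ (-c)); rewrite !addrK.
Qed.
Lemma o_leD2l a b c : le (c + a) (c + b) = le a b.
Proof. by rewrite ![c + _]addrC o_leD2r. Qed.
Lemma o_leD a b c e : le a b -> le c e -> le (a + c) (b + e).
Proof.
move=> h1 h2; apply: (o_trans (b := b + c)); first by rewrite o_leD2r.
by rewrite o_leD2l.
Qed.
Lemma o_subge0 a b : le 0 (b - a) = le a b.
Proof. by rewrite -(o_leD2r _ _ a) add0r subrK. Qed.
Lemma o_leN a b : le (-a) (-b) = le b a.
Proof. by rewrite -o_subge0 opprK addrC o_subge0. Qed.
Lemma o_leBl a b c : le (a - b) c = le a (c + b).
Proof. by rewrite -(o_leD2r _ _ b) subrK. Qed.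
Lemma o_leBr a b c : le a (b - c) = le (a + c) b.
Proof. by rewrite -(o_leD2r _ _ c) subrK. Qed.
Lemma o_lem2 a b : le (a *+ 2) (b *+ 2) = le a b.
Proof.
apply/idP/idP; last by move=> h; rewrite !mulr2n o_leD.
move=> h; case/orP: (o_tot a b) => // hba.
have e : b *+ 2 = a *+ 2 by apply: o_anti => //; rewrite !mulr2n o_leD.
have h1 : le (b + b) (a + b) by rewrite o_leD2r.
have h2 : le (a + b) (a + a) by rewrite o_leD2l.
have : a + b = b + b.
  apply: o_anti => //; apply: (o_trans h2); rewrite -!mulr2n e; exact: o_refl.
by move/addIr => ->; apply: o_refl.
Qed.
Lemma o_m2inj (a b : L) : a *+ 2 = b *+ 2 -> a = b.
Proof.
move=> e; apply: o_anti.
  by rewrite -(@o_lem2 a b) e o_refl.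
by rewrite -(@o_lem2 b a) e o_refl.
Qed.
Lemma o_minl a b : le (minL le a b) a.
Proof. rewrite /minL; case: ifP => h //; first exact: o_refl.
by case/orP: (o_tot a b); rewrite ?h. Qed.
Lemma o_minr a b : le (minL le a b) b.
Proof. rewrite /minL; case: ifP => h //; exact: o_refl. Qed.
Lemma o_minP c a b : le c a -> le c b -> le c (minL le a b).
Proof. by rewrite /minL; case: ifP. Qed.
End OG.


Inductive zex := zV of nat | zA of zex & zex | zN of zex | z0.

Fixpoint addl (c1 c2 : seq int) : seq int :=
  match c1, c2 with
  | [::], _ => c2
  | _, [::] => c1
  | x :: c1', y :: c2' => (x + y) :: addl c1' c2'
  end.

Fixpoint zco (e : zex) : seq int :=
  match e with
  | zV i => nseq i 0 ++ [:: 1]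
  | zA a b => addl (zco a) (zco b)
  | zN a => map (fun x => - x) (zco a)
  | z0 => [::]
  end.

Section ZT.
Variable L : zmodType.
Fixpoint zev (env : seq L) (e : zex) : L :=
  match e with
  | zV i => nth 0 env i
  | zA a b => zev env a + zev env b
  | zN a => - zev env a
  | z0 => 0
  end.
Fixpoint lin (env : seq L) (c : seq int) : L :=
  match c with
  | [::] => 0
  | x :: c' => (head 0 env) *~ x + lin (behead env) c'
  end.
Lemma linD env c1 c2 : lin env (addl c1 c2) = lin env c1 + lin env c2.
Proof.
elim: c1 env c2 => [|x c1 IH] env [|y c2] /=; rewrite ?add0r ?addr0 //.
by rewrite IH mulrzDr addrACA.
Qed.
Lemma linN env c : lin env (map (fun x => - x) c) = - lin env c.
Proof. elim: c env => [|x c IH] env /=; first by rewrite oppr0.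
by rewrite IH mulrNz opprD. Qed.
Lemma linV env i : lin env (nseq i 0 ++ [:: 1]) = nth 0 env i.
Proof.
elim: i env => [|i IH] [|e env] /=; rewrite ?mulr1z ?addr0 ?mulr0z ?add0r //.
by rewrite (IH [::]) nth_nil.
Qed.
Lemma lin0 env c : all (fun x => x == 0) c -> lin env c = 0.
Proof. elim: c env => [|x c IH] env //= /andP [/eqP -> h].
by rewrite mulr0z add0r IH. Qed.
Lemma zevE env e : zev env e = lin env (zco e).
Proof.
elim: e => [i|a IHa b IHb|a IHa|] /=; rewrite ?linV ?linD ?linN ?IHa ?IHb //.
Qed.
Lemma zsound env e : all (fun x => x == 0) (zco e) -> zev env e = 0.
Proof. by move=> h; rewrite zevE lin0. Qed.
End ZT.

Ltac zatoms e env :=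
  lazymatch e with
  | ?a + ?b => let env' := zatoms a env in zatoms b env'
  | - ?a => zatoms a env
  | 0 => env
  | _ => lazymatch env with
         | context [e] => env
         | _ => constr:(e :: env)
         end
  end.
Ltac zidx x l :=
  lazymatch l with
  | x :: _ => constr:(0%N)
  | _ :: ?l' => let n := zidx x l' in constr:(n.+1)
  end.
Ltac zreif e env :=
  lazymatch e with
  | ?a + ?b => let ra := zreif a env in let rb := zreif b env in constr:(zA ra rb)
  | - ?a => let ra := zreif a env in constr:(zN ra)
  | 0 => constr:(z0)
  | _ => let i := zidx e env in constr:(zV i)
  end.
Ltac zring :=
  rewrite ?mulrS ?mulr0n; apply/eqP; rewrite -subr_eq0; apply/eqP;
  lazymatch goal with
  | |- @eq ?T ?e 0 =>
    let env := zatoms e (@nil T) in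
    let r := zreif e env in
    change (zev env r = 0); apply: zsound; vm_compute; reflexivity
  end.

Goal forall (L : zmodType) (a b c : L), a + (b - c) - (a - c) = b + 0.
Proof. move=> L a b c. zring. Qed.
Goal forall (L : zmodType) (a b c : L), a *+ 2 + (b - c) - (a - c) = b + a *+ 1.
Proof. move=> L a b c. zring. Qed.


Section M.
Variables (L : zmodType) (le : rel L).
Hypothesis hL : ordered_abelian_group le.
Variables (X : Type) (d : X -> X -> L).
Hypothesis hd : Lmetric le d.

Lemma o_lin a b a' b' : le a' b' -> b - a = b' - a' -> le a b.
Proof. by move=> h e; rewrite -(o_subge0 hL) e (o_subge0 hL). Qed.

Lemma d_ge0 x y : le 0 (d x y). Proof. by case: hd. Qed.
Lemma d_sym x y : d x y = d y x. Proof. by case: hd. Qed.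
Lemma d_tri x y z : le (d x z) (d x y + d y z). Proof. by case: hd => _ _ _; apply. Qed.

Lemma absdiff_ge a s : le a s -> absdiff le a s = s - a.
Proof. by rewrite /absdiff => ->. Qed.

Lemma seg1 S p q w : is_segment le d S p q -> S w -> d p w + d w q = d p q.
Proof.
case=> a [b [al [hab iso hp hq hS]]] /hS [s [has hsb <-]].
rewrite -hp -hq !iso ?(o_refl hL) // !absdiff_ge //; zring.
Qed.

Lemma seg2 S p q t : is_segment le d S p q -> le 0 t -> le t (d p q) ->
  exists w, S w /\ d p w = t.
Proof.
case=> a [b [al [hab iso hp hq hS]]] h0 ht.
have h1 : le a (a + t) by apply: (o_lin h0); zring.
have dpq : d p q = b - a by rewrite -hp -hq iso ?(o_refl hL) // absdiff_ge.
have h2 : le (a + t) b by apply: (o_lin ht); rewrite dpq; zring.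
exists (al (a + t)); split; first by apply/hS; exists (a + t).
rewrite -hp iso ?(o_refl hL) // absdiff_ge //; zring.
Qed.

Lemma seg3 S p q w w' e : is_segment le d S p q -> S w -> S w' ->
  le (d p w) (d p w' + e) -> le (d p w') (d p w + e) -> le (d w w') e.
Proof.
case=> a [b [al [hab iso hp hq hS]]] /hS [s [has hsb <-]] /hS [s' [has' hsb' <-]].
rewrite -hp !iso ?(o_refl hL) // (absdiff_ge has) (absdiff_ge has') /absdiff.
case: ifP => _ h1 h2.
  by apply: (o_lin h2); zring.
by apply: (o_lin h1); zring.
Qed.

Lemma absdiff_sh c s t : absdiff le (c - s) (c - t) = absdiff le s t.
Proof.
rewrite /absdiff.
have -> : le (c - s) (c - t) = le t s by rewrite (o_leD2l hL) (o_leN hL).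
case: ifP => h1; case: ifP => h2.
- by rewrite (o_anti hL h1 h2); zring.
- zring.
- zring.
- by case/orP: (o_tot hL s t); rewrite ?h1 ?h2.
Qed.

Lemma seg_rev S p q : is_segment le d S p q -> is_segment le d S q p.
Proof.
case=> a [b [al [hab iso hp hq hS]]].
have inI s : le a s -> le s b -> le a (a + b - s) && le (a + b - s) b.
  move=> h1 h2; apply/andP; split.
    by apply: (o_lin h2); zring.
  by apply: (o_lin h1); zring.
exists a, b, (fun t => al (a + b - t)); split => //.
- move=> s t h1 h2 h3 h4.
  case/andP: (inI _ h1 h2) => h5 h6; case/andP: (inI _ h3 h4) => h7 h8.
  by rewrite iso // absdiff_sh.
- by have -> : a + b - a = b by zring.
- by have -> : a + b - b = a by zring.
- move=> w; split=> [/hS [s [h1 h2 <-]]|[s [h1 h2 <-]]].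
    case/andP: (inI _ h1 h2) => h5 h6.
    by exists (a + b - s); split => //; congr al; zring.
  by case/andP: (inI _ h1 h2) => h5 h6; apply/hS; exists (a + b - s).
Qed.
End M.


Section P.
Variables (L : zmodType) (le : rel L).
Hypothesis hL : ordered_abelian_group le.
Variables (X : Type) (d : X -> X -> L) (gp : X -> X -> X -> L).
Hypothesis hd : Lmetric le d.
Hypothesis hgp : forall x y v, gp x y v *+ 2 = d x v + d y v - d x y.

Lemma gp_sym x y v : gp x y v = gp y x v.
Proof. by apply: (o_m2inj hL); rewrite !hgp (d_sym hd y x); zring. Qed.

Lemma gp_sum x y z : gp y z x + gp x z y = d x y.
Proof. apply: (o_m2inj hL); rewrite mulrnDl !hgp (d_sym hd y x) (d_sym hd z y) (d_sym hd z x); zring. Qed.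

Lemma gp_le x y v : le (gp x y v) (d x v).
Proof.
rewrite -(o_lem2 hL) hgp; apply: (o_lin hL (d_tri hd y x v)).
rewrite (d_sym hd y x); zring.
Qed.

Lemma gp_ge0 x y v : le 0 (gp x y v).
Proof.
rewrite -(o_lem2 hL) hgp; apply: (o_lin hL (d_tri hd x v y)).
rewrite (d_sym hd v y); zring.
Qed.

Lemma thinA delta Sab Sac a b c : le 0 delta -> hyperbolic le gp delta ->
  is_segment le d Sab a b -> is_segment le d Sac a c ->
  thin_at le d gp a b c Sab Sac (delta *+ 4).
Proof.
move=> hdel H sab sac u v hu hv e ht.
have gub : gp u b a = d a u.
  apply: (o_m2inj hL); rewrite hgp (d_sym hd u a) (d_sym hd b a) -(seg1 hL sab hu).
  zring.
have gcv : gp c v a = d a u.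
  apply: (o_m2inj hL); rewrite hgp (d_sym hd v a) (d_sym hd c a) (d_sym hd c v) -(seg1 hL sac hv) -e.
  zring.
have h1 : le (d a u - delta) (gp b v a).
  apply: (o_trans hL _ (H a b v c)).
  have : le (d a u) (minL le (gp b c a) (gp c v a)).
    by apply: o_minP => //; rewrite gcv (o_refl hL).
  by move=> h; apply: (o_lin hL h); zring.
have h2 : le (d a u - delta - delta) (gp u v a).
  apply: (o_trans hL _ (H a u v b)).
  have : le (d a u - delta) (minL le (gp u b a) (gp b v a)).
    apply: o_minP => //; rewrite gub; by apply: (o_lin hL hdel); zring.
  by move=> h; apply: (o_lin hL h); zring.
move: h2; rewrite -(o_lem2 hL) hgp (d_sym hd u a) (d_sym hd v a) -e => h.
by apply: (o_lin hL h); zring.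
Qed.

Lemma H2H1 delta : geodesic le d -> H2 le d gp delta -> H1 le gp delta.
Proof.
move=> hg H v x y z.
have ht1 : le (minL le (gp x z v) (gp z y v)) (gp x z v) by apply: o_minl.
have ht2 : le (minL le (gp x z v) (gp z y v)) (gp z y v) by apply: o_minr.
have ht0 : le 0 (minL le (gp x z v) (gp z y v)) by apply: o_minP; apply: gp_ge0.
move: (minL le (gp x z v) (gp z y v)) ht0 ht1 ht2 => t ht0 ht1 ht2.
case: (hg v x) => Svx svx; case: (hg v z) => Svz svz; case: (hg v y) => Svy svy.
case: (hg x z) => Sxz sxz; case: (hg z y) => Szy szy.
have [a [ha pa]] : exists a, Svx a /\ d v a = t.
  apply: (seg2 hL svx ht0); rewrite (d_sym hd); exact: (o_trans hL ht1 (gp_le _ _ _)).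
have [c [hc pc]] : exists c, Svz c /\ d v c = t.
  apply: (seg2 hL svz ht0); rewrite (d_sym hd).
  by apply: (o_trans hL ht1); rewrite gp_sym; apply: gp_le.
have [b [hb pb]] : exists b, Svy b /\ d v b = t.
  apply: (seg2 hL svy ht0); rewrite (d_sym hd).
  by apply: (o_trans hL ht2); rewrite gp_sym; apply: gp_le.
case: (H v x z Svx Sxz Svz (And3 svx sxz svz)) => th1 _ _.
case: (H v z y Svz Szy Svy (And3 svz szy svy)) => th2 _ _.
have hac : le (d a c) delta by apply: th1 => //; rewrite ?pa ?pc.
have hcb : le (d c b) delta by apply: th2 => //; rewrite ?pb ?pc.
have := o_leD hL (o_leD hL (o_leD hL (d_tri hd x a y) (d_tri hd a c y))
   (d_tri hd c b y)) (o_leD hL hac hcb).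
rewrite (d_sym hd x a) => h.
rewrite -(o_lem2 hL) hgp (d_sym hd x v) (d_sym hd y v) -(seg1 hL svx ha)
  -(seg1 hL svy hb) pa pb.
by apply: (o_lin hL h); zring.
Qed.

Lemma gp_le2 x y v : le (gp x y v) (d v y).
Proof. by rewrite gp_sym (d_sym hd); apply: gp_le. Qed.

Lemma H2H3 delta : H2 le d gp delta -> H3 le d delta.
Proof.
move=> H x y z Sxy Syz Sxz tri u hu.
case: (tri) => sxy syz sxz; case: (H _ _ _ _ _ _ tri) => thx thy _.
case/orP: (o_tot hL (d x u) (gp y z x)) => hle.
  have [v [hv pv]] : exists v, Sxz v /\ d x v = d x u.
    apply: (seg2 hL sxz (d_ge0 hd _ _)); apply: (o_trans hL hle); exact: gp_le2.
  by exists v; split; [left | apply: thx] => //.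
have hyu : le (d y u) (gp x z y).
  apply: (o_lin hL hle); rewrite (d_sym hd y u).
  have -> : d u y = gp y z x + gp x z y - d x u.
    by rewrite (gp_sum x y z) -(seg1 hL sxy hu); zring.
  zring.
have [w [hw pw]] : exists w, Syz w /\ d y w = d y u.
  apply: (seg2 hL syz (d_ge0 hd _ _)); apply: (o_trans hL hyu); exact: gp_le2.
by exists w; split; [right | apply: thy] => //.
Qed.

Lemma thinD delta Sab Sac Sbc a b c : le 0 delta -> H3 le d delta ->
  is_segment le d Sab a b -> is_segment le d Sac a c -> is_segment le d Sbc b c ->
  thin_at le d gp a b c Sab Sac (delta *+ 4).
Proof.
move=> hdel H sab sac sbc u v hu hv e ht.
have [w1 [hw1 d1]] := H a b c Sab Sbc Sac (And3 sab sbc sac) u hu.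
have [w2 [hw2 d2]] := H a c b Sac Sbc Sab (And3 sac (seg_rev hL sbc) sab) v hv.
have h2d : le (delta + delta) (delta *+ 4).
  by apply: (o_lin hL (o_leD hL hdel hdel)); zring.
case: hw1 => [hw1|hw1].
  have hvw : le (d v w1) delta.
    apply: (seg3 hL sac hv hw1); rewrite -e.
      apply: (o_lin hL (o_leD hL (d_tri hd a w1 u) d1)); rewrite (d_sym hd w1 u); zring.
    apply: (o_lin hL (o_leD hL (d_tri hd a u w1) d1)); zring.
  apply: (o_trans hL (d_tri hd u w1 v)); apply: (o_trans hL _ h2d).
  by rewrite (d_sym hd w1 v); apply: o_leD.
case: hw2 => [hw2|hw2].
  have huw : le (d u w2) delta.
    apply: (seg3 hL sab hu hw2); rewrite e.
      apply: (o_lin hL (o_leD hL (d_tri hd a w2 v) d2)); rewrite (d_sym hd w2 v); zring.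
    apply: (o_lin hL (o_leD hL (d_tri hd a v w2) d2)); zring.
  apply: (o_trans hL (d_tri hd u w2 v)); apply: (o_trans hL _ h2d).
  by rewrite (d_sym hd w2 v); apply: o_leD.
have E1 : d b w1 = d b c - d w1 c by rewrite -(seg1 hL sbc hw1); zring.
have E2 : d b w2 = d b c - d w2 c by rewrite -(seg1 hL sbc hw2); zring.
have E3 : d v c = d a c - d a u by rewrite -(seg1 hL sac hv) -e; zring.
have E4 : d b u = d a b - d a u by rewrite (d_sym hd b u) -(seg1 hL sab hu); zring.
have h12 : le (d w1 w2) (delta *+ 2).
  apply: (seg3 hL sbc hw1 hw2).
    have := o_leD hL (o_leD hL (o_leD hL (d_tri hd a u c) (d_tri hd u w1 c))
      (d_tri hd c v w2)) (o_leD hL d1 d2).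
    rewrite (d_sym hd c w2) (d_sym hd c v) E3 => h.
    by rewrite E1 E2; apply: (o_lin hL h); zring.
  have hvii : le ((d a u) *+ 2) (d b a + d c a - d b c).
    by rewrite -hgp (o_lem2 hL).
  have := o_leD hL (o_leD hL (o_leD hL (d_tri hd b w1 u) (d_tri hd c w2 v))
      (o_leD hL d1 d2)) hvii.
  rewrite (d_sym hd c w2) (d_sym hd c v) (d_sym hd w1 u) (d_sym hd w2 v)
    (d_sym hd b a) (d_sym hd c a) E1 E3 E4 => h.
  by rewrite ?E1 ?E2; apply: (o_lin hL h); zring.
apply: (o_trans hL (d_tri hd u w1 v)).
apply: (o_trans hL (o_leD hL (o_refl hL _) (d_tri hd w1 w2 v))).
rewrite (d_sym hd w2 v).
by apply: (o_lin hL (o_leD hL d1 (o_leD hL h12 d2))); zring.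
Qed.
End P.

End Aux.
Import Aux.

Lemma H1mono (L : zmodType) (le : rel L) (X : Type) (gp : X -> X -> X -> L)
  (hL : ordered_abelian_group le) (a b : L) :
  le a b -> H1 le gp a -> H1 le gp b.
Proof.
move=> hab H v x y z; apply: (o_trans hL _ (H v x y z)).
by apply: (o_lin hL hab); zring.
Qed.

Theorem proposition1p2p9 (L : zmodType) (le : rel L) (X : Type)
  (d : X -> X -> L) (gp : X -> X -> X -> L)
  (hL : ordered_abelian_group le)
  (hd : Lmetric le d)
  (hgeo : geodesic le d)
  (hgp : forall x y v, gp x y v *+ 2 = d x v + d y v - d x y)
  (delta : L) (hdelta : le 0 delta) :
  (H1 le gp delta -> H2 le d gp (delta *+ 4)) /\
  (H2 le d gp delta -> H1 le gp (delta *+ 2)) /\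
  (H2 le d gp delta -> H3 le d delta) /\
  (H3 le d delta -> H2 le d gp (delta *+ 4)) /\
  (H1 le gp delta -> H3 le d (delta *+ 4)) /\
  (H3 le d delta -> H1 le gp (delta *+ 8)).
Proof.
have A : H1 le gp delta -> H2 le d gp (delta *+ 4).
  move=> H x y z Sxy Syz Sxz [sxy syz sxz]; split.
  - exact: (thinA hL hd hgp hdelta H sxy sxz).
  - exact: (thinA hL hd hgp hdelta H (seg_rev hL sxy) syz).
  - exact: (thinA hL hd hgp hdelta H (seg_rev hL sxz) (seg_rev hL syz)).
have D : H3 le d delta -> H2 le d gp (delta *+ 4).
  move=> H x y z Sxy Syz Sxz [sxy syz sxz]; split.
  - exact: (thinD hL hd hgp hdelta H sxy sxz syz).
  - exact: (thinD hL hd hgp hdelta H (seg_rev hL sxy) syz sxz).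
  - exact: (thinD hL hd hgp hdelta H (seg_rev hL sxz) (seg_rev hL syz) sxy).
have B := H2H1 hL hd hgp hgeo.
have C := H2H3 hL hd hgp.
have l12 : le delta (delta *+ 2) by apply: (o_lin hL hdelta); zring.
have l48 : le (delta *+ 4) (delta *+ 8).
  by apply: (o_lin hL (o_leD hL (o_leD hL hdelta hdelta) (o_leD hL hdelta hdelta))); zring.
split; first exact: A.
split; first by move=> h; apply: (@H1mono _ _ _ gp hL _ _ l12); apply: B.
split; first exact: C.
split; first exact: D.
split; first by move=> h; apply: C; apply: A.
by move=> h; apply: (@H1mono _ _ _ gp hL _ _ l48); apply: B; apply: D.
Qed.
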